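(* Let $p,q\in(1,\infty)$. For Borel measures $\mu,\nu$ on $[0,D]$ let $A_D(\mu,\nu)$ be the optimal constant $$A_D(\mu,\nu)=\sup\Big\{\frac{(\int_0^D|f|^q d\mu)^{1/q}}{(\int_0^D|f'|^p d\nu)^{1/p}}:\ f\text{ absolutely continuous},\ f(0)=0,\ 0<\int_0^D|f'|^pd\nu<\infty\Big\}$$ and $B_D(\mu,\nu)=\sup_{x\in(0,D)}\hat\nu(0,x)^{1/p^*}\mu(x,D)^{1/q}$. Let $D<D'\le\infty$ and let $(\mu',\nu')$ be an extension of $(\mu,\nu)$ to $[0,D')$: $\mu'|_{[0,D]}=\mu$, $\nu'|_{[0,D]}=\nu$, and $\mu'|_{(D,D')}=0$. (1) If $A_{D'}(\mu',\nu')\le k\,B_{D'}(\mu',\nu')$ for a constant $k$, then $A_D(\mu,\nu)\le k\,B_D(\mu,\nu)$. (2) In particular, if the inequality $A_{D'}(\mu',\nu')\le k\,B_{D'}(\mu',\nu')$ holds for arbitrary (resp. absolutely continuous) pairs $(\mu',\nu')$, then $A_D(\mu,\nu)\le k\,B_D(\mu,\nu)$ holds for arbitrary (resp. absolutely continuous) pairs $(\mu,\nu)$.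
   Context: $p^*=p/(p-1)$. For a measure $\nu$, $v$ denotes the density of its absolutely continuous part with respect to Lebesgue measure, $\hat v=v^{-1/(p-1)}$, and $\hat\nu(\alpha,\beta)=\int_\alpha^\beta\hat v(x)\,dx$; $\mu(\alpha,\beta)$ is the $\mu$-measure of $(\alpha,\beta)$. On $[0,D')$ the quantities $A_{D'}$, $B_{D'}$ are defined analogously with $D$ replaced by $D'$. *)

(* Defs.v *)
From HB Require Import structures.
From mathcomp Require Import all_boot all_order all_algebra.
From mathcomp Require Import all_classical all_reals all_analysis.
From mathcomp Require Import measurable_realfun.
Set Implicit Arguments. Unset Strict Implicit. Unset Printing Implicit Defensive.
Import Order.TTheory GRing.Theory Num.Theory.
Import numFieldNormedType.Exports.
Local Open Scope classical_set_scope.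
Local Open Scope ring_scope.

Section HardyDefs.
Context {R : realType}.
Local Notation leb := (@lebesgue_measure R).

Definition dom_cl (D : R) : set R := `[0, D].
Definition dom_op (D' : \bar R) : set R := [set x | 0 <= x /\ (x%:E < D')%E].

Definition conj_exp (p : R) : R := p / (p - 1).

(* "f is absolutely continuous on I (an interval starting at 0), f(0) = 0,
   and g is (a representative of) its a.e. derivative":
   g is Lebesgue integrable on [0,x] and f x = \int_0^x g for every x in I. *)
Definition AC0_with_deriv (I : set R) (f g : R -> R) : Prop :=
  forall x, I x ->
    leb.-integrable `[0%R, x] (fun t => (g t)%:E) /\
    (f x)%:E = (\int[leb]_(t in `[0%R, x]) (g t)%:E)%E.

(* v is the density (w.r.t. Lebesgue measure) of the absolutely continuous
   part of nu on I: nu = v dx + nu_s with nu_s concentrated on a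
   Lebesgue-null set N (Lebesgue decomposition, restricted to I). *)
Definition ac_density (I : set R) (nu : set R -> \bar R) (v : R -> \bar R) :
    Prop :=
  measurable_fun I v /\ (forall x, I x -> (0 <= v x)%E) /\
  exists N : set R, measurable N /\ leb N = 0%E /\
    forall A, measurable A -> A `<=` I ->
      nu (A `\` N) = (\int[leb]_(x in A) v x)%E.

Definition hatv (p : R) (v : R -> \bar R) (x : R) : \bar R :=
  match v x with
  | r%:E => if r == 0 then +oo%E else (r `^ (- (p - 1)^-1))%:E
  | +oo%E => 0%E
  | -oo%E => +oo%E
  end.

Definition hatnu (p : R) (v : R -> \bar R) (a b : R) : \bar R :=
  (\int[leb]_(x in `](a:R), b[) hatv p v x)%E.

Definition hardy_ratio (p q : R) (I : set R)
    (mu nu : {measure set R -> \bar R}) (f g : R -> R) : \bar R :=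
  ((\int[mu]_(x in I) (`|f x| `^ q)%:E) `^ q^-1 *
   ((\int[nu]_(x in I) (`|g x| `^ p)%:E) `^ p^-1)^-1)%E.

Definition hardyA (p q : R) (I : set R) (mu nu : {measure set R -> \bar R})
    : \bar R :=
  ereal_sup [set r | exists f g : R -> R,
    [/\ AC0_with_deriv I f g,
        (0 < \int[nu]_(x in I) (`|g x| `^ p)%:E)%E,
        (\int[nu]_(x in I) (`|g x| `^ p)%:E < +oo)%E &
        r = hardy_ratio p q I mu nu f g]].

Definition hardyB (p q : R) (I : set R) (E : \bar R)
    (mu : {measure set R -> \bar R}) (v : R -> \bar R) : \bar R :=
  ereal_sup [set (hatnu p v 0 x `^ (conj_exp p)^-1 *
                  mu (`](x:R), +oo[ `&` I) `^ q^-1)%E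
            | x in [set x : R | 0 < x /\ (x%:E < E)%E]].

Definition ac_on (I : set R) (mu : set R -> \bar R) : Prop :=
  forall A, measurable A -> A `<=` I -> leb A = 0%E -> mu A = 0%E.

End HardyDefs.

(* Main.v *)
Require Import Defs.
From HB Require Import structures.
From mathcomp Require Import all_boot all_order all_algebra.
From mathcomp Require Import all_classical all_reals all_analysis.
From mathcomp Require Import measurable_realfun.
Import Order.TTheory GRing.Theory Num.Theory.
Local Open Scope classical_set_scope.
Local Open Scope ring_scope.

Section H.
Context {R : realType}.
Local Notation leb := (@lebesgue_measure R).

Definition phi (p : R) (e : \bar R) : \bar R :=
  match e with
  | r%:E => if r == 0 then +oo%E else (r `^ (- (p - 1)^-1))%:E
  | +oo%E => 0%E
  | -oo%E => +oo%E
  end.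

Lemma hatvE p v : hatv p v = phi p \o v.
Proof. by []. Qed.

Lemma phi_ge0 p e : (0 <= phi p e)%E.
Proof. case: e => [r||] //=; case: ifP => //= _; rewrite lee_fin powR_ge0 //. Qed.

Lemma measurable_phi p : measurable_fun [set: \bar R] (phi p).
Proof.
have -> : phi p = (fun e => if (e == 0%E) || (e == -oo%E) then +oo%E else
   if e == +oo%E then 0%E else ((fine e) `^ (- (p - 1)^-1))%:E).
  by apply/funext => -[r||] //=; rewrite eqe; case: (r == 0).
apply: measurable_fun_ifT.
- apply: (measurable_fun_bool true) => //; rewrite setTI.
  rewrite (_ : _ @^-1` _ = [set 0%E] `|` [set -oo%E]); first exact: measurableU.
  by apply/seteqP; split => x /=; [case/orP => /eqP ->; [left|right] |
     case => ->; rewrite eqxx ?orbT].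
- exact: measurable_cst.
apply: measurable_fun_ifT.
- apply: (measurable_fun_bool true) => //; rewrite setTI.
  rewrite (_ : _ @^-1` _ = [set +oo%E]) //.
  by apply/seteqP; split => x /=; [move/eqP|move=> ->].
- exact: measurable_cst.
apply/measurable_EFinP.
exact: (measurableT_comp (measurable_powR _) (@fine_measurable R _ measurableT)).
Qed.


Section AE.
Local Open Scope ereal_scope.
Variables (I : set R) (mI : measurable I) (hI : leb I < +oo).

Let half (v v' : R -> \bar R) (n : nat) :
  measurable_fun I v -> measurable_fun I v' -> (forall x, I x -> 0 <= v x) ->
  (forall E, measurable E -> E `<=` I ->
     \int[leb]_(x in E) v x = \int[leb]_(x in E) v' x) ->
  ae_eq leb (I `&` [set x | v x <= n%:R%:E]) v v'.
Proof.
move=> mv mv' v0 hE.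
have mDn : measurable (I `&` [set x | v x <= n%:R%:E]).
  exact: emeasurable_fun_infty_c.
have DnI : I `&` [set x | v x <= n%:R%:E] `<=` I by apply: subIsetl.
apply: integral_ae_eq => //.
- apply/integrableP; split; first exact: measurable_funS mv.
  set Dn := I `&` _.
  have h1 : \int[leb]_(x in Dn) `|v x| <= \int[leb]_(x in Dn) (cst n%:R%:E) x.
    apply: ge0_le_integral => //.
    + apply: measurableT_comp => //; exact: measurable_funS mv.
    + by move=> x [Ix vx]; rewrite gee0_abs // v0.
  apply: (le_lt_trans h1); rewrite integral_cst //.
  have h2 : leb Dn <= leb I by apply: le_measure; rewrite ?inE //; apply: subIsetl.
  apply: (@le_lt_trans _ _ (n%:R%:E * leb I)).
    by apply: lee_wpmul2l; rewrite ?lee_fin.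
  by apply: lte_mul_pinfty.
- exact: measurable_funS mv'.
- by move=> E ED mE; apply: hE => //; apply: subset_trans ED DnI.
Qed.

Lemma ae_density (v v' : R -> \bar R) :
  measurable_fun I v -> measurable_fun I v' -> (forall x, I x -> 0 <= v x) ->
  (forall x, I x -> 0 <= v' x) ->
  (forall E, measurable E -> E `<=` I ->
     \int[leb]_(x in E) v x = \int[leb]_(x in E) v' x) ->
  ae_eq leb I v v'.
Proof.
move=> mv mv' v0 v'0 hE.
have A1 := ae_foralln (fun n => half v v' n mv mv' v0 hE).
have A2 := ae_foralln (fun n => half v' v n mv' mv v'0 (fun E mE EI => esym (hE E mE EI))).
apply: filterS2 A1 A2 => x h1 h2 Ix.
case Ev : (v x) => [r| |]; last by have := v0 x Ix; rewrite Ev.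
  rewrite -Ev; apply: (h1 (Num.Def.truncn r).+1); split => //=; rewrite Ev lee_fin.
  exact/ltW/truncnS_gt.
case Ev' : (v' x) => [r| |]; last by have := v'0 x Ix; rewrite Ev'.
  rewrite -Ev -Ev'; apply/esym/(h2 (Num.Def.truncn r).+1); split => //=; rewrite Ev' lee_fin.
  exact/ltW/truncnS_gt.
by [].
Qed.

End AE.

Lemma hatnu_ae (I : set R) (mI : measurable I) p v v' x :
  ae_eq leb I v v' -> `]0, x[ `<=` I ->
  measurable_fun I v -> measurable_fun I v' -> hatnu p v 0 x = hatnu p v' 0 x.
Proof.
move=> hae sub mv mv'; rewrite /hatnu !hatvE.
apply: ae_eq_integral => //.
- exact: measurableT_comp (measurable_phi p) (measurable_funS mI sub mv).
- exact: measurableT_comp (measurable_phi p) (measurable_funS mI sub mv').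
- by move: hae; apply: filterS => y h /sub /h /= ->.
Qed.

Lemma dens_int_eq (I J : set R) (mI : measurable I) (mJ : measurable J)
    (IJ : I `<=` J) (nu nu' : {measure set R -> \bar R}) v v' :
  ac_density I nu v -> ac_density J nu' v' ->
  (forall A, measurable A -> A `<=` I -> nu' A = nu A) ->
  forall E, measurable E -> E `<=` I ->
    (\int[leb]_(x in E) v x = \int[leb]_(x in E) v' x)%E.
Proof.
move=> [mv [v0 [N [mN [N0 hN]]]]] [mv' [v'0 [N' [mN' [N'0 hN']]]]] hnu E mE EI.
have mNN : measurable (N `|` N') by exact: measurableU.
have NN0 : leb (N `|` N') = 0%E by rewrite measureU0.
have mE0 : measurable (E `\` (N `|` N')) by exact: measurableD.
have E0I : E `\` (N `|` N') `<=` I by move=> y [/EI].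
rewrite (@ge0_negligible_integral _ _ _ leb _ _ _ mNN mE) //; last 2 first.
- exact: measurable_funS mv.
- by move=> y /EI; apply: v0.
rewrite [RHS](@ge0_negligible_integral _ _ _ leb _ _ _ mNN mE) //; last 2 first.
- exact: measurable_funS mJ (subset_trans EI IJ) mv'.
- by move=> y /EI /IJ; apply: v'0.
have e1 : E `\` (N `|` N') `\` N = E `\` (N `|` N').
  by apply/seteqP; split => y; [case|move=> [Ey nN]; split => //; move=> Ny; apply: nN; left].
have e2 : E `\` (N `|` N') `\` N' = E `\` (N `|` N').
  by apply/seteqP; split => y; [case|move=> [Ey nN]; split => //; move=> Ny; apply: nN; right].
rewrite -hN // e1 -hN' //; last exact: subset_trans E0I IJ.
by rewrite e2 hnu.
Qed.

Lemma dom_op_meas (D' : \bar R) : measurable (dom_op D').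
Proof.
case: D' => [r| |].
- rewrite (_ : dom_op _ = `[0, r[%classic) //.
  apply/seteqP; split => y; rewrite /dom_op /= in_itv /= ?lte_fin.
    by move=> [-> ->].
  by move=> /andP[-> ->].
- rewrite (_ : dom_op _ = `[0, +oo[%classic) //.
  apply/seteqP; split => y; rewrite /dom_op /= in_itv /= ?andbT ?ltry.
    by move=> [->].
  by move=> ->.
- rewrite (_ : dom_op _ = set0) //.
  by apply/seteqP; split => y //; rewrite /dom_op /= => -[_]; rewrite ltNge leNye.
Qed.

Lemma dom_cl_meas (D : R) : measurable (dom_cl D).
Proof. exact: measurable_itv. Qed.

Lemma hatnu_ge0 (p : R) (v : R -> \bar R) (x : R) : (0 <= hatnu p v 0 x)%E.
Proof. by rewrite /hatnu; apply: integral_ge0 => y _; apply: phi_ge0. Qed.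

Lemma hardyB_ext p q (D : R) (D' : \bar R) (mu mu' : {measure set R -> \bar R})
    (v v' : R -> \bar R) :
  0 < D -> (D%:E < D')%E -> q != 0 ->
  (forall x, 0 < x -> x < D -> hatnu p v' 0 x = hatnu p v 0 x) ->
  (forall A, measurable A -> A `<=` dom_cl D -> mu' A = mu A) ->
  (forall A, measurable A -> A `<=` `]D, +oo[ `&` dom_op D' -> mu' A = 0%E) ->
  hardyB p q (dom_op D') D' mu' v' = hardyB p q (dom_cl D) D%:E mu v.
Proof.
move=> D0 DD' q0 hnu hmu hmu0.
have mO := dom_op_meas D'; have mC := dom_cl_meas D.
have meq x : 0 < x -> x < D ->
    mu' (`]x, +oo[ `&` dom_op D') = mu (`]x, +oo[ `&` dom_cl D).
  move=> x0 xD.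
  have -> : `]x, +oo[ `&` dom_op D' =
      (`]x, +oo[ `&` dom_cl D) `|` (`]D, +oo[ `&` dom_op D').
    apply/seteqP; split => y; rewrite /dom_op /dom_cl /= !in_itv /= ?andbT.
      move=> [xy [y0 yD']]; have [yD|Dy] := leP y D.
        by left; split => //; apply/andP; split.
      by right.
    case=> -[].
      move=> xy /andP[y0 yD].
      by split => //; split => //; apply: le_lt_trans DD'; rewrite lee_fin.
    by move=> Dy [y0 yD']; split => //; apply: lt_trans Dy.
  rewrite measureU //; last 3 first.
  - exact: measurableI.
  - exact: measurableI.
  - apply/seteqP; split => y // [[_]]; rewrite /dom_cl /= !in_itv /= => /andP[_ yD] [].
    by rewrite andbT => Dy; have := lt_le_trans Dy yD; rewrite ltxx.
  rewrite -[RHS]adde0; congr (_ + _).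
    by apply: hmu; [exact: measurableI|apply: subIsetr].
  by apply: hmu0; [exact: measurableI|].
have t0 x : (D <= x) -> (x%:E < D')%E ->
    (hatnu p v' 0 x `^ (conj_exp p)^-1 * mu' (`]x, +oo[ `&` dom_op D') `^ q^-1 = 0)%E.
  move=> Dx xD'; rewrite hmu0 ?poweR0r ?mule0 ?invr_eq0 //; first exact: measurableI.
  move=> y [] /=; rewrite ?in_itv /= ?andbT => xy yO; split => //.
  by rewrite /= ?in_itv /= ?andbT; apply: le_lt_trans xy.
have B0 : (0 <= hardyB p q (dom_cl D) D%:E mu v)%E.
  apply: le_trans (ereal_sup_ubound _); last first.
    exists (D / 2); first by split; [rewrite divr_gt0|rewrite lte_fin ltr_pdivrMr // ltr_pMr // ltr1n].
    reflexivity.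
  by rewrite mule_ge0 // poweR_ge0.
apply/eqP; rewrite eq_le; apply/andP; split.
- apply: ge_ereal_sup => _ [x [x0 xD'] <-].
  have [xD|Dx] := ltP x D; last by rewrite t0.
  rewrite hnu // meq //; apply: ereal_sup_ubound; exists x => //; split => //.
- apply: ge_ereal_sup => _ [x [x0 xD] <-].
  rewrite lte_fin in xD.
  rewrite -hnu // -meq //; apply: ereal_sup_ubound; exists x => //; split => //.
  by apply: lt_trans DD'; rewrite lte_fin.
Qed.
Lemma dom_split (D : R) (D' : \bar R) : 0 <= D -> (D%:E < D')%E ->
  dom_op D' = dom_cl D `|` (`]D, +oo[ `&` dom_op D').
Proof.
move=> D0 DD'; apply/seteqP; split => y; rewrite /dom_op /dom_cl /= ?in_itv /= ?andbT.
  move=> [y0 yD']; have [yD|Dy] := leP y D; first by left; rewrite y0.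
  by right.
case; last by case.
move=> /andP[y0 yD]; split => //; apply: le_lt_trans DD'; by rewrite lee_fin.
Qed.

Lemma int_split (D : R) (D' : \bar R) (m : {measure set R -> \bar R}) (F : R -> \bar R) :
  0 <= D -> (D%:E < D')%E ->
  measurable_fun (dom_cl D) F -> measurable_fun (`]D, +oo[ `&` dom_op D') F ->
  (forall x, dom_op D' x -> (0 <= F x)%E) ->
  (\int[m]_(x in dom_op D') F x =
   \int[m]_(x in dom_cl D) F x + \int[m]_(x in `]D, +oo[ `&` dom_op D') F x)%E.
Proof.
move=> D0 DD' mF1 mF2 F0.
have mT : measurable (`]D, +oo[ `&` dom_op D') by apply: measurableI => //; apply: dom_op_meas.
rewrite {1}(dom_split _ _ D0 DD') ge0_integral_setU //.
- by rewrite /dom_cl; exact: measurable_itv.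
- by apply/measurable_funU => //; rewrite /dom_cl; exact: measurable_itv.
- by move=> x; rewrite -(dom_split _ _ D0 DD'); apply: F0.
- rewrite disj_set2E; apply/eqP/seteqP; split => y //.
  rewrite /dom_cl /= !in_itv /= andbT => -[/andP[_ yD] [Dy _]].
  by have := lt_le_trans Dy yD; rewrite ltxx.
Qed.
Lemma AC_meas (D : R) (f g : R -> R) : 0 <= D -> AC0_with_deriv (dom_cl D) f g ->
  measurable_fun (dom_cl D) f /\ measurable_fun (dom_cl D) g.
Proof.
move=> D0 hAC.
have hD : dom_cl D D by rewrite /dom_cl /= in_itv /= D0 lexx.
have [intgD fD] := hAC D hD.
split; last by apply/measurable_EFinP; exact: (measurable_int _ intgD).
have cont := @parameterized_integral_continuous R 0 D g D0 intgD.
have mP := @subspace_continuous_measurable_fun R `[0, D] _ (measurable_itv _) cont.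
apply: eq_measurable_fun mP => x; rewrite inE => /hAC [_ fx].
by rewrite /from_subspace /= /parameterized_integral /Rintegral -fx.
Qed.
Lemma hardyA_ext p q (D : R) (D' : \bar R) (mu nu mu' nu' : {measure set R -> \bar R}) :
  0 < D -> (D%:E < D')%E -> p != 0 ->
  (forall A, measurable A -> A `<=` dom_cl D -> mu' A = mu A) ->
  (forall A, measurable A -> A `<=` dom_cl D -> nu' A = nu A) ->
  (forall A, measurable A -> A `<=` `]D, +oo[ `&` dom_op D' -> mu' A = 0%E) ->
  (hardyA p q (dom_cl D) mu nu <= hardyA p q (dom_op D') mu' nu')%E.
Proof.
move=> D0 DD' p0 hmu hnu hmu0.
have D0' := ltW D0.
apply: ge_ereal_sup => _ [f [g [hAC hpos hfin ->]]].
have [mf mg] := AC_meas _ _ _ D0' hAC.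
pose g' x := if x <= D then g x else 0.
pose f' x := if x <= D then f x else f D.
have hD : dom_cl D D by rewrite /dom_cl /= in_itv /= D0' lexx.
have [intgD fD] := hAC D hD.
have mT : measurable (`]D, +oo[ `&` dom_op D') by apply: measurableI => //; apply: dom_op_meas.
have inD x : dom_cl D x -> x <= D by rewrite /dom_cl /= in_itv /= => /andP[].
have outD x : (`]D, +oo[ `&` dom_op D') x -> D < x.
  by case; rewrite /= in_itv /= andbT.
have m1 : measurable_fun (dom_cl D) (fun x => (`|f' x| `^ q)%:E).
  apply/measurable_EFinP; apply: (@eq_measurable_fun _ _ _ _ _ (fun x => `|f x| `^ q)).
    by move=> x; rewrite inE => /inD xD; rewrite /f' xD.
  apply: measurableT_comp (measurable_powR _) _.
  exact: measurableT_comp (@normr_measurable _ _) mf.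
have m2 : measurable_fun (`]D, +oo[ `&` dom_op D') (fun x => (`|f' x| `^ q)%:E).
  apply/measurable_EFinP; apply: (@eq_measurable_fun _ _ _ _ _ (cst (`|f D| `^ q))).
    by move=> x; rewrite inE => /outD Dx; rewrite /f' leNgt Dx.
  exact: measurable_cst.
have num : (\int[mu']_(x in dom_op D') (`|f' x| `^ q)%:E =
            \int[mu]_(x in dom_cl D) (`|f x| `^ q)%:E)%E.
  rewrite (int_split D D' mu' _ D0' DD' m1 m2); last by move=> x _; rewrite lee_fin powR_ge0.
  rewrite (eq_measure_integral mzero (m1:=mu') (D := `]D, +oo[ `&` dom_op D')); last first.
    by move=> A mA AS; rewrite hmu0.
  rewrite integral_measure_zero adde0 (eq_measure_integral mu); last first.
    by move=> A mA AS; rewrite hmu.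
  by apply: eq_integral => x; rewrite inE => /inD xD; rewrite /f' xD.
have n1 : measurable_fun (dom_cl D) (fun x => (`|g' x| `^ p)%:E).
  apply/measurable_EFinP; apply: (@eq_measurable_fun _ _ _ _ _ (fun x => `|g x| `^ p)).
    by move=> x; rewrite inE => /inD xD; rewrite /g' xD.
  apply: measurableT_comp (measurable_powR _) _.
  exact: measurableT_comp (@normr_measurable _ _) mg.
have n2 : measurable_fun (`]D, +oo[ `&` dom_op D') (fun x => (`|g' x| `^ p)%:E).
  apply/measurable_EFinP; apply: (@eq_measurable_fun _ _ _ _ _ (cst (0:R))).
    by move=> x; rewrite inE => /outD Dx; rewrite /g' leNgt Dx /= normr0 powR0.
  exact: measurable_cst.
have den : (\int[nu']_(x in dom_op D') (`|g' x| `^ p)%:E =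
            \int[nu]_(x in dom_cl D) (`|g x| `^ p)%:E)%E.
  rewrite (int_split D D' nu' _ D0' DD' n1 n2); last by move=> x _; rewrite lee_fin powR_ge0.
  rewrite [X in (_ + X)%E]integral0_eq ?adde0; last first.
    by move=> x /outD Dx; rewrite /g' leNgt Dx /= normr0 powR0.
  rewrite (eq_measure_integral nu); last by move=> A mA AS; rewrite hnu.
  by apply: eq_integral => x; rewrite inE => /inD xD; rewrite /g' xD.
apply: ereal_sup_ubound; exists f', g'; split.
- move=> x [x0 xD']; have [xD|Dx] := leP x D.
    have hx : dom_cl D x by rewrite /dom_cl /= in_itv /= x0 xD.
    have [ix fx] := hAC x hx.
    have e : {in `[0, x]%classic, (fun t => (g t)%:E) =1 (fun t => (g' t)%:E)}.
      move=> t; rewrite inE /= in_itv /= => /andP[_ tx].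
      by rewrite /g' (le_trans tx xD).
    split. have := @eq_integrable _ _ _ leb `[0, x]%classic (measurable_itv _) (fun t => (g t)%:E) (fun t => (g' t)%:E) e ix. exact.
    by rewrite /f' xD fx; apply: eq_integral.
  have e : {in `[0, x]%classic, (EFin \o g) \_ `[0, D]%classic =1 (fun t => (g' t)%:E)}.
    move=> t; rewrite inE /= in_itv /= => /andP[t0 tx].
    rewrite patchE /g'.
    have -> : (t \in `[0, D]%classic) = (t <= D).
      apply/idP/idP; first by move=> /set_mem; rewrite /= in_itv /= => /andP[].
      by move=> tD; apply/mem_set; rewrite /= in_itv /= t0 tD.
    by case: ifPn.
  have e2 : `[0, x]%classic `&` `[0, D]%classic = `[0, D]%classic.
    apply: setIidr => t; rewrite /= !in_itv /= => /andP[-> tD].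
    exact: le_trans tD (ltW Dx).
  split.
    apply: (@eq_integrable _ _ _ leb `[0, x]%classic (measurable_itv _) _ (fun t => (g' t)%:E) e).
    by apply/integrable_restrict => //; rewrite e2.
  rewrite /f' leNgt Dx /= fD.
  apply: (eq_trans _ (@eq_integral _ _ _ leb `[0, x]%classic _ _ e)).
  by rewrite -integral_mkcondr e2.
- by apply: (@eq_ind_r _ _ (fun z => (0 < z)%E) hpos); exact: den.
- by apply: (@eq_ind_r _ _ (fun z => (z < +oo)%E) hfin); exact: den.
- rewrite /hardy_ratio; congr (_ * _)%E.
    by congr (_ `^ _)%E; apply/esym; exact: num.
  by congr ((_ `^ _)^-1)%E; apply/esym; exact: den.
Qed.
Lemma part1 (p q : R) (hp : 1 < p) (hq : 1 < q) (D : R) (hD : 0 < D)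
    (D' : \bar R) (hDD' : (D%:E < D')%E) (k : R)
    (mu nu mu' nu' : {measure set R -> \bar R}) (v v' : R -> \bar R) :
     ac_density (dom_cl D) nu v ->
     ac_density (dom_op D') nu' v' ->
     (forall A, measurable A -> A `<=` dom_cl D -> mu' A = mu A) ->
     (forall A, measurable A -> A `<=` dom_cl D -> nu' A = nu A) ->
     (forall A, measurable A -> A `<=` `]D, +oo[ `&` dom_op D' -> mu' A = 0%E) ->
     (hardyA p q (dom_op D') mu' nu' <= k%:E * hardyB p q (dom_op D') D' mu' v')%E ->
     (hardyA p q (dom_cl D) mu nu <= k%:E * hardyB p q (dom_cl D) D%:E mu v)%E.
Proof.
move=> hv hv' hmu hnu hmu0 H.
have p0 : p != 0 by rewrite gt_eqF // (lt_trans ltr01).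
have q0 : q != 0 by rewrite gt_eqF // (lt_trans ltr01).
have D0 := ltW hD.
have mC := dom_cl_meas D; have mO := dom_op_meas D'.
have CO : dom_cl D `<=` dom_op D' by rewrite (dom_split _ _ D0 hDD'); apply: subsetUl.
have ieq := dens_int_eq _ _ mC mO CO _ _ _ _ hv hv' hnu.
have [mv [v0 _]] := hv; have [mv' [v'0 _]] := hv'.
have mv'C : measurable_fun (dom_cl D) v' := measurable_funS mO CO mv'.
have hI : (leb (dom_cl D) < +oo)%E.
  by rewrite /dom_cl lebesgue_measure_itv /=; case: ifP => _; rewrite ?ltry.
have hae := ae_density _ mC hI _ _ mv mv'C v0 (fun x Cx => v'0 x (CO x Cx)) ieq.
have hB : hardyB p q (dom_op D') D' mu' v' = hardyB p q (dom_cl D) D%:E mu v.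
  apply: hardyB_ext => //.
  move=> x x0 xD; apply/esym/(hatnu_ae _ mC) => //.
  by move=> y; rewrite /dom_cl /= !in_itv /= => /andP[y0 yx]; rewrite (ltW y0) (ltW (lt_trans yx xD)).
apply: le_trans (hardyA_ext _ _ _ _ _ _ _ _ hD hDD' p0 hmu hnu hmu0) _.
by rewrite -hB.
Qed.
Section Ext.
Variables (D : R) (hD : 0 < D) (D' : \bar R) (hDD' : (D%:E < D')%E).
Let mC := dom_cl_meas D.

Lemma restr_eq (m : {measure set R -> \bar R}) A :
  A `<=` dom_cl D -> mrestr m mC A = m A.
Proof. by move=> AC; rewrite /mrestr setIidl. Qed.

Lemma restr_tail (m : {measure set R -> \bar R}) A :
  A `<=` `]D, +oo[ `&` dom_op D' -> mrestr m mC A = 0%E.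
Proof.
move=> AT; rewrite /mrestr (_ : A `&` dom_cl D = set0) ?measure0 //.
apply/seteqP; split => y //; move=> [Ay Cy].
have [Dy _] := AT y Ay.
move: Dy Cy; rewrite /dom_cl /= !in_itv /= andbT => Dy /andP[_ yD].
by have := lt_le_trans Dy yD; rewrite ltxx.
Qed.

Lemma restr_ac (m : {measure set R -> \bar R}) :
  ac_on (dom_cl D) m -> ac_on (dom_op D') (mrestr m mC).
Proof.
move=> hac A mA AO A0; rewrite /mrestr; apply: hac.
- exact: measurableI.
- exact: subIsetr.
- by apply: (subset_measure0 _ _ _ A0) => //; exact: measurableI.
Qed.

Lemma restr_dens (nu : {measure set R -> \bar R}) v :
  ac_density (dom_cl D) nu v ->
  ac_density (dom_op D') (mrestr nu mC) (fun x => if x <= D then v x else 0%E).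
Proof.
move=> [mv [v0 [N [mN [N0 hN]]]]].
have D0 := ltW hD.
have inD x : dom_cl D x -> x <= D by rewrite /dom_cl /= in_itv /= => /andP[].
have outD x : (`]D, +oo[ `&` dom_op D') x -> D < x.
  by case; rewrite /= in_itv /= andbT.
have mT : measurable (`]D, +oo[ `&` dom_op D') by apply: measurableI => //; apply: dom_op_meas.
split.
  rewrite (dom_split _ _ D0 hDD'); apply/measurable_funU => //; split.
    by apply: eq_measurable_fun mv => x; rewrite inE => /inD ->.
  apply: (@eq_measurable_fun _ _ _ _ _ (cst 0%E)); last exact: measurable_cst.
  by move=> x; rewrite inE => /outD Dx; rewrite leNgt Dx.
split.
  move=> x [x0 _]; case: ifPn => // xD; apply: v0.
  by rewrite /dom_cl /= in_itv /= x0 xD.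
exists N; split => //; split => // A mA AO.
rewrite /mrestr (_ : (A `\` N) `&` dom_cl D = (A `&` dom_cl D) `\` N); last first.
  by apply/seteqP; split => y; [move=> [[Ay nN] Cy]|move=> [[Ay Cy] nN]].
rewrite hN; last 2 first.
- exact: measurableI.
- exact: subIsetr.
rewrite integral_mkcondr; apply: eq_integral => x; rewrite inE => /AO [x0 _].
rewrite patchE.
have -> : (x \in dom_cl D) = (x <= D).
  apply/idP/idP; first by move=> /set_mem; rewrite /dom_cl /= in_itv /= => /andP[].
  by move=> tD; apply/mem_set; rewrite /dom_cl /= in_itv /= x0 tD.
by [].
Qed.

End Ext.
End H.


Theorem lemma4p2 (R : realType) (p q : R) (hp : 1 < p) (hq : 1 < q)
    (D : R) (hD : 0 < D) (D' : \bar R) (hDD' : (D%:E < D')%E) (k : R) :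
  (* (1) *)
  (forall (mu nu mu' nu' : {measure set R -> \bar R}) (v v' : R -> \bar R),
     ac_density (dom_cl D) nu v ->
     ac_density (dom_op D') nu' v' ->
     (forall A, measurable A -> A `<=` dom_cl D -> mu' A = mu A) ->
     (forall A, measurable A -> A `<=` dom_cl D -> nu' A = nu A) ->
     (forall A, measurable A -> A `<=` `]D, +oo[ `&` dom_op D' -> mu' A = 0%E) ->
     (hardyA p q (dom_op D') mu' nu' <= k%:E * hardyB p q (dom_op D') D' mu' v')%E ->
     (hardyA p q (dom_cl D) mu nu <= k%:E * hardyB p q (dom_cl D) D%:E mu v)%E)
  /\
  (* (2), arbitrary pairs *)
  ((forall (mu' nu' : {measure set R -> \bar R}) (v' : R -> \bar R),
      ac_density (dom_op D') nu' v' ->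
      (hardyA p q (dom_op D') mu' nu' <= k%:E * hardyB p q (dom_op D') D' mu' v')%E) ->
   forall (mu nu : {measure set R -> \bar R}) (v : R -> \bar R),
      ac_density (dom_cl D) nu v ->
      (hardyA p q (dom_cl D) mu nu <= k%:E * hardyB p q (dom_cl D) D%:E mu v)%E)
  /\
  (* (2), absolutely continuous pairs *)
  ((forall (mu' nu' : {measure set R -> \bar R}) (v' : R -> \bar R),
      ac_on (dom_op D') mu' -> ac_on (dom_op D') nu' ->
      ac_density (dom_op D') nu' v' ->
      (hardyA p q (dom_op D') mu' nu' <= k%:E * hardyB p q (dom_op D') D' mu' v')%E) ->
   forall (mu nu : {measure set R -> \bar R}) (v : R -> \bar R),
      ac_on (dom_cl D) mu -> ac_on (dom_cl D) nu ->
      ac_density (dom_cl D) nu v ->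
      (hardyA p q (dom_cl D) mu nu <= k%:E * hardyB p q (dom_cl D) D%:E mu v)%E).
Proof.
have P1 := part1 p q hp hq D hD D' hDD' k.
split; first by move=> mu nu mu' nu' v v'; apply: P1.
split.
- move=> H mu nu v hv.
  apply: (P1 mu nu (mrestr mu (dom_cl_meas D)) (mrestr nu (dom_cl_meas D)) v _ hv (restr_dens D hD D' hDD' nu v hv)).
  + by move=> A _ hAC1; exact: (restr_eq D mu A hAC1).
  + by move=> A _ hAC1; exact: (restr_eq D nu A hAC1).
  + by move=> A _ AT; exact: (restr_tail D D' mu A AT).
  + exact: H (restr_dens D hD D' hDD' nu v hv).
- move=> H mu nu v hmu hnu hv.
  apply: (P1 mu nu (mrestr mu (dom_cl_meas D)) (mrestr nu (dom_cl_meas D)) v _ hv (restr_dens D hD D' hDD' nu v hv)).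
  + by move=> A _ hAC1; exact: (restr_eq D mu A hAC1).
  + by move=> A _ hAC1; exact: (restr_eq D nu A hAC1).
  + by move=> A _ AT; exact: (restr_tail D D' mu A AT).
  + apply: H (restr_dens D hD D' hDD' nu v hv).
    * exact: (restr_ac D D' mu hmu).
    * exact: (restr_ac D D' nu hnu).
Qed.
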